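(* Let $A\in\mathbb R^{n\times n}$, $B\in\mathbb R^{n\times m}$, $K\in\mathbb R^{m\times n}$ be as in the context, and let $$\gamma^*_{L0}\;=\;\max_{\alpha\in\mathcal A_0}\ \inf_{P\in\mathbb S^n,\,P\succeq 0}\ \lambda_{\max}\big(A(\alpha)^TP+PA(\alpha)\big)\ \in [-\infty,\infty).$$ Then $K$ is resilient if and only if $\gamma^*_{L0}=-\infty$, and $K$ is not resilient if and only if $\gamma^*_{L0}\ge 0$.
   Context: Fix integers $N\ge 1$ and $n_1,\dots,n_N\ge 1$, $m_1,\dots,m_N\ge 0$, with $n=\sum_i n_i$, $m=\sum_i m_i$. Let $A=[A_{ij}]_{1\le i,j\le N}\in\mathbb R^{n\times n}$ with blocks $A_{ij}\in\mathbb R^{n_i\times n_j}$, $B=\mathrm{diag}(B_1,\dots,B_N)\in\mathbb R^{n\times m}$ with $B_i\in\mathbb R^{n_i\times m_i}$, and $K=[K_{ij}]_{1\le i,j\le N}\in\mathbb R^{m\times n}$ with blocks $K_{ij}\in\mathbb R^{m_i\times n_j}$. For a matrix $\alpha\in\mathbb R^{N\times N}$, write $K\circ\alpha=[\alpha_{ij}K_{ij}]_{1\le i,j\le N}$ (each block scaled by the corresponding scalar entry) and $A(\alpha)=A+B\,(K\circ\alpha)$. The pure attack space is $\mathcal A_0=\{\alpha\in\{0,1\}^{N\times N}:\alpha_{ii}=1 \text{ for all } i\}$. A square matrix is called stable if all its eigenvalues have strictly negative real part. The controller $K$ is called resilient if $A(\alpha)$ is stable for every $\alpha\in\mathcal A_0$,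 and not resilient otherwise (i.e. if $A(\alpha)$ is not stable for some $\alpha\in\mathcal A_0$). $\mathbb S^n$ denotes real symmetric $n\times n$ matrices, $\succeq$ the positive semidefinite order, and $\lambda_{\max}$ the largest eigenvalue of a symmetric matrix. *)

(* Defs.v *)
From HB Require Import structures.
From mathcomp Require Import all_boot all_order all_algebra.
Set Implicit Arguments. Unset Strict Implicit. Unset Printing Implicit Defensive.
Import Order.TTheory GRing.Theory Num.Theory.
Local Open Scope ring_scope.

(* A complex number a + i b (a b : R) is an eigenvalue of the real square
   matrix M iff the complexified matrix has an eigenvector x + i y, i.e.
   M x = a x - b y and M y = b x + a y with (x, y) <> (0, 0). *)
Definition cplx_eigenvalue (R : rcfType) (d : nat) (M : 'M[R]_d) (a b : R) :=
  exists (x y : 'cV[R]_d), (x != 0 \/ y != 0) /\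
    M *m x = a *: x - b *: y /\ M *m y = b *: x + a *: y.

Definition stable (R : rcfType) (d : nat) (M : 'M[R]_d) :=
  forall a b : R, cplx_eigenvalue M a b -> a < 0.

Definition psd (R : rcfType) (d : nat) (P : 'M[R]_d) :=
  P^T = P /\ forall x : 'cV[R]_d, 0 <= (x^T *m P *m x) 0 0.

(* lambda_max(S) < c  (S symmetric, so all its eigenvalues are real) *)
Definition lambda_max_lt (R : rcfType) (d : nat) (S : 'M[R]_d) (c : R) :=
  forall a, eigenvalue S a -> a < c.
Definition lambda_max_ge (R : rcfType) (d : nat) (S : 'M[R]_d) (c : R) :=
  exists2 a, eigenvalue S a & c <= a.

Definition pure_attack (N : nat) (alpha : 'I_N -> 'I_N -> bool) :=
  forall i, alpha i i = true.

Definition Aalpha (R : rcfType) (N : nat) (nb mb : 'I_N -> nat)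
  (Ab : forall i j, 'M[R]_(nb i, nb j))
  (Bb : forall i j, 'M[R]_(nb i, mb j))
  (Kb : forall i j, 'M[R]_(mb i, nb j))
  (alpha : 'I_N -> 'I_N -> bool) : 'M[R]_(\sum_i nb i) :=
  mxblock Ab + mxblock Bb *m mxblock (fun i j => (alpha i j)%:R *: Kb i j).

Definition resilient (R : rcfType) (N : nat) (nb mb : 'I_N -> nat)
  (Ab : forall i j, 'M[R]_(nb i, nb j))
  (Bb : forall i j, 'M[R]_(nb i, mb j))
  (Kb : forall i j, 'M[R]_(mb i, nb j)) :=
  forall alpha, pure_attack alpha -> stable (Aalpha Ab Bb Kb alpha).

(* gamma*_{L0} = -oo :  for every alpha in A_0 the infimum over P is -oo *)
Definition gammaL0_neg_infty (R : rcfType) (N : nat) (nb mb : 'I_N -> nat)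
  (Ab : forall i j, 'M[R]_(nb i, nb j))
  (Bb : forall i j, 'M[R]_(nb i, mb j))
  (Kb : forall i j, 'M[R]_(mb i, nb j)) :=
  forall alpha, pure_attack alpha ->
    forall c : R, exists P : 'M[R]_(\sum_i nb i), psd P /\
      lambda_max_lt ((Aalpha Ab Bb Kb alpha)^T *m P + P *m Aalpha Ab Bb Kb alpha) c.

(* gamma*_{L0} >= 0 :  some alpha in A_0 has infimum over P at least 0 *)
Definition gammaL0_nonneg (R : rcfType) (N : nat) (nb mb : 'I_N -> nat)
  (Ab : forall i j, 'M[R]_(nb i, nb j))
  (Bb : forall i j, 'M[R]_(nb i, mb j))
  (Kb : forall i j, 'M[R]_(mb i, nb j)) :=
  exists alpha, pure_attack alpha /\
    forall P : 'M[R]_(\sum_i nb i), psd P ->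
      lambda_max_ge ((Aalpha Ab Bb Kb alpha)^T *m P + P *m Aalpha Ab Bb Kb alpha) 0.

(* Main.v *)
Require Import Defs.
From HB Require Import structures.
From mathcomp Require Import all_boot all_order all_algebra.
From mathcomp Require Import complex polyrcf.
From Stdlib Require Import Classical.
From mathcomp Require Import ring lra.
Set Implicit Arguments. Unset Strict Implicit. Unset Printing Implicit Defensive.
Import Order.TTheory GRing.Theory Num.Theory.
Local Open Scope ring_scope.
Local Open Scope sesquilinear_scope.

Section Easy.
Variable R : rcfType.

Definition qf d (Q : 'M[R]_d) (x : 'cV[R]_d) := (x^T *m Q *m x) 0 0.
Arguments qf {d}.

Lemma vvT_gt0 d (v : 'rV[R]_d) : v != 0 -> 0 < (v *m v^T) 0 0.
Proof.
move=> nz; rewrite mxE.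
have ge : forall j, 0 <= v 0 j * v^T j 0 by move=> j; rewrite mxE -expr2 sqr_ge0.
rewrite lt_def; apply/andP; split; last by apply: sumr_ge0 => j _; apply: ge.
apply: contra nz => /eqP /psumr_eq0P H; apply/eqP/rowP => j.
have := H (fun i _ => ge i) j isT; rewrite !mxE -expr2 => /eqP; rewrite sqrf_eq0 => /eqP ->.
by [].
Qed.

Lemma negdef_eig d (Q : 'M[R]_d) : (forall x, x != 0 -> qf Q x < 0) ->
  forall a, eigenvalue Q a -> a < 0.
Proof.
move=> H a /eigenvalueP [v vQ nz]; have := H v^T.
rewrite trmx_eq0 nz => /(_ isT); rewrite /qf trmxK vQ -scalemxAl mxE.
by rewrite pmulr_llt0 // vvT_gt0.
Qed.

Lemma seq_neg_bound (s : seq R) : (forall r, r \in s -> r < 0) ->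
  exists2 m, m < 0 & forall r, r \in s -> r <= m.
Proof.
elim: s => [|r s IH] H; first by exists (-1) => //; rewrite oppr_lt0.
have [m m0 Hm] : exists2 m, m < 0 & forall r, r \in s -> r <= m.
  by apply: IH => x xs; apply: H; rewrite inE xs orbT.
exists (Num.max r m).
  by rewrite gt_max m0 H // inE eqxx.
move=> x; rewrite inE => /orP [/eqP ->|xs]; first by rewrite le_max lexx.
by rewrite le_max Hm // orbT.
Qed.

End Easy.
Arguments qf {R d}.
Section E2.
Variable R : rcfType.

Lemma qf_le0 d (Q : 'M[R]_d) : (forall x, x != 0 -> qf Q x < 0) -> forall x, qf Q x <= 0.
Proof.
move=> H x; have [->|nz] := eqVneq x 0; last by apply/ltW/H.
by rewrite /qf trmx0 mul0mx mul0mx mxE.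
Qed.

Lemma negdef_stable d (M P : 'M[R]_d) : psd P ->
  (forall x, x != 0 -> qf (M^T *m P + P *m M) x < 0) -> stable M.
Proof.
move=> [_ Ppsd] H a b [x [y [nz [Mx My]]]].
pose pf (u v : 'cV[R]_d) := (u^T *m P *m v) 0 0 : R.
have eQ z : qf (M^T *m P + P *m M) z = pf (M *m z) z + pf z (M *m z).
  by rewrite /qf /pf mulmxDr mulmxDl trmx_mul !mulmxA mxE.
have pfDl u v w : pf (u + v) w = pf u w + pf v w.
  by rewrite /pf linearD /= !mulmxDl !mxE.
have pfBl u v w : pf (u - v) w = pf u w - pf v w.
  by rewrite /pf linearB /= !mulmxBl !mxE.
have pfZl u w (k : R) : pf (k *: u) w = k * pf u w.
  by rewrite /pf linearZ /= -!scalemxAl !mxE.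
have pfDr u v w : pf w (u + v) = pf w u + pf w v.
  by rewrite /pf !mulmxDr !mxE.
have pfBr u v w : pf w (u - v) = pf w u - pf w v.
  by rewrite /pf !mulmxBr !mxE.
have pfZr u w (k : R) : pf w (k *: u) = k * pf w u.
  by rewrite /pf -!scalemxAr !mxE.
have key : qf (M^T *m P + P *m M) x + qf (M^T *m P + P *m M) y =
           2 * a * (pf x x + pf y y).
  rewrite !eQ Mx My pfBl pfBr !pfDl !pfDr !pfZl !pfZr; ring.
have neg : qf (M^T *m P + P *m M) x + qf (M^T *m P + P *m M) y < 0.
  case: nz => nz.
    by rewrite ltr_wnDr ?qf_le0 ?H.
  by rewrite ltr_wnDl ?qf_le0 ?H.
rewrite ltNge; apply/negP => a0.
have : 0 <= 2 * a * (pf x x + pf y y).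
  by rewrite mulr_ge0 ?mulr_ge0 ?addr_ge0 ?Ppsd.
by rewrite -key leNgt neg.
Qed.
End E2.
Section E3.
Variable R : rcfType.

Lemma psd_scale d (P : 'M[R]_d) t : 0 <= t -> psd P -> psd (t *: P).
Proof.
move=> t0 [Ps Pp]; split; first by rewrite linearZ /= Ps.
by move=> x; rewrite -scalemxAr -scalemxAl mxE mulr_ge0.
Qed.

Lemma scale_lt d (M P : 'M[R]_d) : psd P ->
  (forall x, x != 0 -> qf (M^T *m P + P *m M) x < 0) ->
  forall c, exists P', psd P' /\ lambda_max_lt (M^T *m P' + P' *m M) c.
Proof.
move=> Pp H c; set Q := M^T *m P + P *m M.
have eneg := negdef_eig H.
have p0 : char_poly Q != 0 by apply: monic_neq0; apply: char_poly_monic.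
have sneg : forall r, r \in rootsR (char_poly Q) -> r < 0.
  move=> r; rewrite -(roots_on_rootsR p0) => /andP [_ rr].
  by apply: eneg; rewrite eigenvalue_root_char.
have [m m0 Hm] := seq_neg_bound sneg.
pose t := `|c| / (- m) + 1.
have t0 : 0 < t by rewrite /t ltr_wpDl // divr_ge0 // ?oppr_ge0 ?ltW.
exists (t *: P); split; first by apply: psd_scale => //; apply: ltW.
move=> a; have -> : M^T *m (t *: P) + t *: P *m M = t *: Q.
  by rewrite -scalemxAr -scalemxAl scalerDr.
move=> /eigenvalueP [v vQ nz].
have eQ : eigenvalue Q (a / t).
  apply/eigenvalueP; exists v => //.
  apply: (scalerI (lt0r_neq0 t0)); rewrite scalemxAr vQ scalerA.
  by rewrite mulrC divfK // lt0r_neq0.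
have : a / t <= m.
  by apply: Hm; rewrite -(roots_on_rootsR p0) -eigenvalue_root_char eQ.
rewrite ler_pdivrMr // => ale.
apply: (le_lt_trans ale).
have -> : m * t = - `|c| + m.
  by rewrite /t; field; rewrite ?oppr_eq0 lt_eqF.
have : - `|c| <= c by rewrite lerNnormlW.
by move=> h; apply: (lt_le_trans _ h); rewrite gtrDl.
Qed.
End E3.
Section H2.
Variable R : rcfType.
Local Notation C := R[i].
Local Notation toC := (real_complex R).

Lemma toC_real (r : R) : toC r \is Num.real.
Proof. by apply/complex_realP; exists r. Qed.

Lemma conj_toC (r : R) : (toC r)^* = toC r.
Proof. by rewrite conj_Creal // toC_real. Qed.

Lemma H2 d (Q : 'M[R]_d) : Q^T = Q -> (forall a, eigenvalue Q a -> a < 0) ->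
  forall x, x != 0 -> qf Q x < 0.
Proof.
move=> Qs Hneg x xnz.
pose QC := map_mx toC Q.
have herm : QC \is hermsymmx.
  apply/is_hermitianmxP; rewrite expr0 scale1r.
  apply/matrixP => i j; rewrite !mxE conj_toC.
  by rewrite -[in RHS]Qs mxE.
have /orthomx_spectralP E := hermitian_normalmx herm.
have sreal := hermitian_spectral_diag_real herm.
set U := spectralmx QC in E; set s := spectral_diag QC in E sreal.
have Uu : U \is unitarymx by apply: spectral_unitarymx.
have Uunit : U \in unitmx by apply: unitarymx_unit.
have UQ : U *m QC = diag_mx s *m U.
  by rewrite {1}E !mulmxA mulmxV // mul1mx.
have sneg : forall i, s 0 i < 0.
  move=> i; have /complex_realP [r sr] := mxOverP sreal 0 i.
  have ei : eigenvalue QC (s 0 i).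
    apply/eigenvalueP; exists (row i U).
      by rewrite -row_mul UQ row_mul row_diag_mx -scalemxAl -rowE.
    have : row i (U *m U^t* ) = row i 1%:M by rewrite (unitarymxP Uu).
    rewrite row_mul => h; apply/eqP => h0; move: h; rewrite h0 mul0mx.
    by move=> /rowP /(_ i); rewrite !mxE eqxx /= => /eqP; rewrite eq_sym oner_eq0.
  rewrite sr -[0]/(toC 0) ltcR; apply: Hneg.
  move: ei; rewrite eigenvalue_root_char sr /QC -map_char_poly fmorph_root.
  by rewrite -eigenvalue_root_char.
pose xC := map_mx toC x.
pose z := U *m xC.
have xCT : xC^t* = xC^T.
  by apply/matrixP => i j; rewrite !mxE conj_toC.
have eq1 : toC (qf Q x) = (z^t* *m diag_mx s *m z) 0 0.
  rewrite /qf (_ : toC _ = (map_mx toC (x^T *m Q *m x)) 0 0); last by rewrite [RHS]mxE.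
  rewrite !map_mxM -map_trmx -/xC -/QC E.
  rewrite /z (invmx_unitary Uu) trmx_mul map_mxM xCT !mulmxA.
  by [].
have eq2 : (z^t* *m diag_mx s *m z) 0 0 = \sum_j s 0 j * `|z j 0| ^+ 2.
  rewrite mxE; apply: eq_bigr => j _; rewrite mul_mx_diag !mxE normCKC.
  by rewrite mulrAC mulrC.
have znz : z != 0.
  apply: contra xnz => /eqP z0.
  have : xC = invmx U *m z by rewrite /z mulKmx.
  by rewrite z0 mulmx0 => /eqP; rewrite map_mx_eq0.
have [j zj] : exists j, z j 0 != 0.
  case: (pickP (fun j => z j 0 != 0)) => [j zj | h]; first by exists j.
  case/negP: znz; apply/eqP/matrixP => j k; rewrite ord1 [RHS]mxE.
  by apply/eqP; exact: negbFE (h j).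
have : toC (qf Q x) < 0.
  rewrite eq1 eq2 (bigD1 j) //=.
  have h1 : \sum_(k | k != j) s 0 k * `|z k 0| ^+ 2 <= 0.
    apply: sumr_le0 => k _; apply: mulr_le0_ge0; first exact: ltW.
    exact: exprn_ge0 (normr_ge0 _).
  have h2 : s 0 j * `|z j 0| ^+ 2 < 0.
    by rewrite nmulr_rlt0 ?sneg // exprn_gt0 // normr_gt0.
  by rewrite ltr_wnDr.
by rewrite -[0]/(toC 0) ltcR.
Qed.

End H2.

Section Core.
Variable C : numClosedFieldType.

Lemma amgm (a b K e : C) : 0 <= a -> 0 <= b -> 0 <= K -> 0 < e ->
  K * a * b <= e * a ^+ 2 + (K ^+ 2 / (4 * e) + e) * b ^+ 2.
Proof.
move=> a0 b0 K0 e0.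
have e4 : 4 * e != 0 by rewrite mulf_neq0 // ?pnatr_eq0 // lt0r_neq0.
have eq : e * a ^+ 2 + (K ^+ 2 / (4 * e) + e) * b ^+ 2 - K * a * b =
          e * (a - K / (2 * e) * b) ^+ 2 + e * b ^+ 2.
  by field; rewrite ?e4 ?mulf_neq0 ?pnatr_eq0 ?lt0r_neq0.
have r1 : (a - K / (2 * e) * b) \is Num.real.
  by rewrite rpredB ?ger0_real // mulr_ge0 // divr_ge0 // mulr_ge0 // ltW.
rewrite -subr_ge0 eq addr_ge0 //; apply: mulr_ge0; rewrite ?(ltW e0) //.
- by rewrite -realEsqr.
- by rewrite -realEsqr ger0_real.
Qed.


Lemma le_sum1 (I : finType) (F : I -> C) i : (forall j, 0 <= F j) ->
  F i <= \sum_j F j.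
Proof.
by move=> H; rewrite (bigD1 i) //= lerDl; apply: sumr_ge0 => j _.
Qed.

Lemma core n (T : 'M[C]_n) (dl : C) : 0 < dl -> is_trig_mx T ->
  (forall i, 'Re (T i i) <= - dl) ->
  exists h : 'I_n -> C, (forall i, 0 < h i) /\
    forall v : 'cV[C]_n, v != 0 ->
      'Re ((v^t* *m diag_mx (\row_i h i) *m T *m v) 0 0) < 0.
Proof.
move=> dl0 /is_trig_mxP Ttrig Tdiag.
pose K := 1 + \sum_i \sum_j `|T i j|.
have K0 : 0 < K.
  apply: (lt_le_trans ltr01); rewrite lerDl.
  by apply: sumr_ge0 => i _; apply: sumr_ge0 => j _.
have KT i j : `|T i j| <= K.
  have h1 := @le_sum1 _ (fun j => `|T i j| : C) j (fun _ => normr_ge0 _).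
  have h2 := @le_sum1 _ (fun i => \sum_j `|T i j| : C) i
    (fun k => sumr_ge0 _ (fun l _ => normr_ge0 (T k l))).
  apply: (le_trans h1); apply: (le_trans h2).
  by rewrite /K lerDr ler01.
have n1 : 0 < n%:R + 1 :> C by rewrite natr1 ltr0Sn.
pose e := dl / (4 * (n%:R + 1)).
have e0 : 0 < e by rewrite divr_gt0 // mulr_gt0 // ltr0n.
pose c := K ^+ 2 / (4 * e) + e.
have ec : e <= c by rewrite /c lerDr divr_ge0 ?exprn_ge0 ?ltW // mulr_gt0 // ltr0n.
have c0 : 0 < c by apply: lt_le_trans ec.
pose r := e / c.
have r0 : 0 < r by rewrite divr_gt0.
have r1 : r <= 1 by rewrite ler_pdivrMr // mul1r.
have cr : c * r = e by rewrite /r mulrC divfK // lt0r_neq0.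
exists (fun i => r ^+ i); split; first by move=> i; rewrite exprn_gt0.
move=> v vnz.
pose a (i : 'I_n) := (`|v i 0| : C).
pose H (i : 'I_n) := r ^+ i * a i ^+ 2.
have H0 i : 0 <= H i.
  by apply: mulr_ge0; apply: exprn_ge0; [exact: ltW | exact: normr_ge0].
have -> : (v^t* *m diag_mx (\row_i r ^+ i) *m T *m v) 0 0 =
     \sum_j \sum_i ((v i 0)^* * r ^+ i * T i j * v j 0).
  rewrite mxE; apply: eq_bigr => j _; rewrite mxE mulr_suml; apply: eq_bigr => i _.
  by rewrite mul_mx_diag !mxE.
rewrite raddf_sum; under eq_bigr => j _ do rewrite raddf_sum.
pose Y i j := e * H i + e * H j - (i == j)%:R * (dl * H i).
apply: (@le_lt_trans _ _ (\sum_j \sum_i Y i j)).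
  apply: ler_sum => j _; apply: ler_sum => i _.
  have ai i' : 0 <= a i' by apply: normr_ge0.
  have ri i' : 0 <= r ^+ i' by apply: exprn_ge0; apply: ltW.
  case: (ltngtP i j) => [lt|gt|eq].
  - have ne : (i == j) = false by apply/negbTE; rewrite -val_eqE /= neq_ltn lt.
    rewrite Ttrig // mulr0 mul0r raddf0 /Y ne mul0r subr0.
    by rewrite addr_ge0 // mulr_ge0 // ltW.
  - have ne : (i == j) = false by apply/negbTE; rewrite -val_eqE /= neq_ltn gt orbT.
    rewrite /Y ne mul0r subr0.
    apply: le_trans (leif_Re_Creal _).1 _.
    rewrite !normrM norm_conjC (ger0_norm (ri i)) -/(a i) -/(a j).
    have am := amgm (ai i) (ai j) (ltW K0) e0.
    have hc : c * r ^+ i <= e * r ^+ j.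
      have -> : (i : nat) = (i.-1).+1 by rewrite prednK // (leq_ltn_trans _ gt).
      rewrite exprS mulrA cr; apply: ler_wpM2l; first exact: ltW.
      apply: ler_wiXn2l; [exact: ltW | exact: r1 |].
      by rewrite -ltnS prednK // (leq_ltn_trans _ gt).
    apply: (@le_trans _ _ (r ^+ i * (K * a i * a j))).
      have -> : a i * r ^+ i * `|T i j| * a j = r ^+ i * (`|T i j| * a i * a j).
        by ring.
      apply: ler_wpM2l => //; apply: ler_wpM2r => //.
      exact: (ler_wpM2r (ai i) (KT i j)).
    apply: (@le_trans _ _ (r ^+ i * (e * a i ^+ 2 + (K ^+ 2 / (4 * e) + e) * a j ^+ 2))).
      by apply: ler_wpM2l.
    rewrite mulrDr; apply: lerD; first by rewrite /H mulrCA.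
    rewrite -/c (_ : r ^+ i * (c * a j ^+ 2) = (c * r ^+ i) * a j ^+ 2); last by ring.
    rewrite /H mulrA; apply: ler_wpM2r; [exact: exprn_ge0 (ai j) | exact: hc].
  - have ij : i = j by apply: val_inj.
    rewrite -ij.
    have -> : (v i 0)^* * r ^+ i * T i i * v i 0 = H i * T i i.
      by rewrite /H /a normCKC; ring.
    change ('Re (H i * T i i) <= Y i i).
    rewrite (ReMl (ger0_real (H0 i))).
    have -> : Y i i = (e * H i + e * H i) + H i * (- dl) by rewrite /Y eqxx /=; ring.
    apply: (@le_trans _ _ (H i * - dl)); first by apply: ler_wpM2l.
    by rewrite lerDr addr_ge0 // mulr_ge0 // ltW.
have inner j : \sum_i Y i j = e * \sum_i H i + (n%:R * e - dl) * H j.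
  rewrite /Y sumrB big_split /= -mulr_sumr sumr_const card_ord.
  rewrite [X in _ - X](bigD1 j) //= eqxx mul1r [X in dl * H j + X]big1 ?addr0; last first.
    by move=> i ij; rewrite (negbTE ij) mul0r.
  by rewrite -mulr_natl; ring.
under eq_bigr => j _ do rewrite inner.
rewrite big_split /= sumr_const card_ord -mulr_sumr.
have S0 : 0 < \sum_i H i.
  have [i vi] : exists i, v i 0 != 0.
    case: (pickP (fun j => v j 0 != 0)) => [j vj | h]; first by exists j.
    case/negP: vnz; apply/eqP/matrixP => j k; rewrite ord1 [RHS]mxE.
    by apply/eqP; exact: negbFE (h j).
  rewrite (bigD1 i) //=; apply: ltr_pwDl; last by apply: sumr_ge0 => k _.
  by rewrite mulr_gt0 ?exprn_gt0 // normr_gt0.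
have -> : (e * \sum_i H i) *+ n + (n%:R * e - dl) * \sum_i H i =
    - (dl * (n%:R + 2) / (2 * (n%:R + 1))) * \sum_i H i.
  rewrite -mulr_natl /e; field.
  by rewrite lt0r_neq0.
rewrite nmulr_rlt0 // oppr_lt0 divr_gt0 // ?mulr_gt0 // ?ltr0n //.
by rewrite (lt_le_trans n1) // lerD2l ler1n.
Qed.

End Core.

Lemma char_poly_tr (F : fieldType) n (A : 'M[F]_n) : char_poly A^T = char_poly A.
Proof.
rewrite /char_poly -det_tr; congr (\det _).
rewrite /char_poly_mx linearB /= tr_scalar_mx.
by rewrite -map_trmx trmxK.
Qed.

Section Lyap.
Variable R : rcfType.
Local Notation C := R[i].
Local Notation toC := (real_complex R).

Lemma eig_col d (A : 'M[C]_d) l : eigenvalue A l ->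
  exists2 y : 'cV[C]_d, y != 0 & A *m y = l *: y.
Proof.
rewrite eigenvalue_root_char -char_poly_tr -eigenvalue_root_char.
move=> /eigenvalueP [w wA wnz]; exists w^T; first by rewrite trmx_eq0.
by rewrite -[A]trmxK -trmx_mul wA linearZ.
Qed.

Lemma stable_re d (M : 'M[R]_d) l : stable M -> eigenvalue (map_mx toC M) l ->
  'Re l < 0.
Proof.
move=> sM /eig_col [y ynz My].
pose xr := map_mx (@complex.Re R) y; pose xi := map_mx (@complex.Im R) y.
have hR i : \sum_j toC (M i j) * 'Re (y j 0) = 'Re l * 'Re (y i 0) - 'Im l * 'Im (y i 0).
  have := congr1 (fun A : 'cV[C]_d => 'Re (A i 0)) My; rewrite /= !mxE raddf_sum.
  move=> e; rewrite -ReM -e; apply: eq_bigr => j _; rewrite mxE.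
  change (toC (M i j) * 'Re (y j 0) = 'Re (toC (M i j) * y j 0)).
  by rewrite (ReMl (toC_real _)).
have hI i : \sum_j toC (M i j) * 'Im (y j 0) = 'Re l * 'Im (y i 0) + 'Re (y i 0) * 'Im l.
  have := congr1 (fun A : 'cV[C]_d => 'Im (A i 0)) My; rewrite /= !mxE raddf_sum.
  move=> e; rewrite -ImM -e; apply: eq_bigr => j _; rewrite mxE.
  change (toC (M i j) * 'Im (y j 0) = 'Im (toC (M i j) * y j 0)).
  by rewrite (ImMl (toC_real _)).
have : complex.Re l < 0.
  apply: (sM _ (complex.Im l)); exists xr, xi; split; last split.
  - apply: NNPP => /not_or_and [/negP/negPn/eqP xr0 /negP/negPn/eqP xi0].
    case/negP: ynz.
    apply/eqP/matrixP => i k; rewrite ord1 mxE.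
    have := congr1 (fun A : 'cV[R]_d => A i 0) xr0; have := congr1 (fun A : 'cV[R]_d => A i 0) xi0.
    rewrite /xi /xr !mxE; case: (y i 0) => [p q] /= -> ->; by [].
  - apply/matrixP => i k; apply: (@complexI R); rewrite ord1 !mxE.
    rewrite rmorphB !rmorphM /= !complexRe !complexIm.
    rewrite -hR rmorph_sum; apply: eq_bigr => j _.
    by rewrite -complexRe rmorphM /xr mxE.
  - apply/matrixP => i k; apply: (@complexI R); rewrite ord1 !mxE.
    rewrite rmorphD !rmorphM /= !complexRe !complexIm.
    rewrite addrC (mulrC ('Im l)) -hI rmorph_sum; apply: eq_bigr => j _.
    by rewrite -complexIm rmorphM /xi mxE.
by rewrite -(ltcR) complexRe.
Qed.

Lemma trig_eig n (T : 'M[C]_n) i : is_trig_mx T -> eigenvalue T (T i i).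
Proof.
move=> tT; rewrite eigenvalue_root_char char_poly_trig //; apply/rootP.
by rewrite horner_prod (bigD1 i) //= hornerXsubC subrr mul0r.
Qed.

Lemma sim_eig n (U A : 'M[C]_n) l : U \in unitmx ->
  eigenvalue (U *m A *m invmx U) l -> eigenvalue A l.
Proof.
move=> Uu /eigenvalueP [v vT nz]; apply/eigenvalueP; exists (v *m U).
  have := congr1 (mulmx^~ U) vT; rewrite /= !mulmxA mulmxKV // -scalemxAl.
  by [].
apply: contra nz => /eqP vU0; apply/eqP.
by rewrite -[v](mulmxK Uu) vU0 mul0mx.
Qed.

Lemma bridge d (x y : 'cV[R]_d) (N : 'M[C]_d) :
  toC ((x^T *m map_mx (@complex.Re R) N *m y) 0 0) =
  'Re (((map_mx toC x)^T *m N *m map_mx toC y) 0 0).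
Proof.
rewrite !mxE rmorph_sum raddf_sum; apply: eq_bigr => j _.
rewrite !mxE rmorphM rmorph_sum mulr_suml.
change ('Re ((\sum_i ((map_mx toC x)^T 0 i * N i j)) * (map_mx toC y) j 0)) with
  ('Re ((\sum_i ((map_mx toC x)^T 0 i * N i j)) * toC (y j 0))).
rewrite raddf_sum mulr_suml; apply: eq_bigr => i _; rewrite !mxE.
change (toC (x i 0 * complex.Re (N i j)) * toC (y j 0) =
  'Re (toC (x i 0) * N i j * toC (y j 0))).
by rewrite (ReMr (toC_real _)) (ReMl (toC_real _)) -complexRe rmorphM.
Qed.

Lemma trmxC_mul m n p (A : 'M[C]_(m, n)) (B : 'M[C]_(n, p)) :
  (A *m B)^t* = B^t* *m A^t*.
Proof. by rewrite trmx_mul map_mxM. Qed.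

Lemma toC_tC d (x : 'cV[R]_d) : (map_mx toC x)^t* = (map_mx toC x)^T.
Proof. by apply/matrixP => i j; rewrite !mxE conj_toC. Qed.

Lemma lyap d (M : 'M[R]_d) : (0 < d)%N -> stable M ->
  exists P, psd P /\ forall x, x != 0 -> qf (M^T *m P + P *m M) x < 0.
Proof.
move=> d0 sM.
pose MC := map_mx toC M.
have [U Uu trig] := Schur MC d0.
have Uunit : U \in unitmx := unitarymx_unit Uu.
rewrite /similar_to conjumx // in trig.
set T := U *m MC *m invmx U in trig.
have Tneg i : 'Re (T i i) < 0.
  by apply: (stable_re sM); apply: (sim_eig Uunit); apply: trig_eig.
have sneg : forall r, r \in [seq complex.Re (T i i) | i <- enum 'I_d] -> r < 0.
  move=> r /mapP [i _ ->]; rewrite -(ltcR) complexRe; exact: Tneg.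
have [m m0 Hm] := seq_neg_bound sneg.
pose dl := toC (- m).
have dl0 : 0 < dl by rewrite -[0]/(toC 0) ltcR oppr_gt0.
have Tdl i : 'Re (T i i) <= - dl.
  rewrite -complexRe /dl -rmorphN opprK lecR; apply: Hm.
  by apply/mapP; exists i; rewrite ?mem_enum.
have [h [h0 hneg]] := core dl0 trig Tdl.
pose Hd := diag_mx (\row_i h i).
pose PC := U^t* *m Hd *m U.
pose P := map_mx (@complex.Re R) PC.
have Hd_herm : Hd^t* = Hd.
  rewrite /Hd tr_diag_mx map_diag_mx; congr diag_mx; apply/rowP => i.
  rewrite !mxE.
  by apply: conj_Creal; rewrite ger0_real // ltW.
have PCh : PC^t* = PC by rewrite /PC !trmxC_mul trmxCK Hd_herm mulmxA.
have PT : P^T = P.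
  apply/matrixP => i j; rewrite !mxE; apply: (@complexI R).
  rewrite !complexRe.
  have := congr1 (fun A : 'M[C]_d => A i j) PCh; rewrite !mxE => <-.
  by rewrite Re_conj.
have key (x y : 'cV[R]_d) : toC ((x^T *m P *m y) 0 0) =
    'Re (((map_mx toC x)^t* *m PC *m map_mx toC y) 0 0).
  by rewrite /P bridge toC_tC.
have form (w : 'cV[C]_d) : (w^t* *m Hd *m w) 0 0 = \sum_j h j * `|w j 0| ^+ 2.
  rewrite mxE; apply: eq_bigr => j _; rewrite mul_mx_diag !mxE normCKC.
  by rewrite mulrAC mulrC.
have xw (x : 'cV[R]_d) : (map_mx toC x)^t* *m PC = (U *m map_mx toC x)^t* *m Hd *m U.
  by rewrite /PC trmxC_mul !mulmxA.
exists P; split.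
  split => // x; rewrite -lecR key xw -mulmxA form.
  have z0 : 0 <= \sum_j h j * `|(U *m map_mx toC x) j 0| ^+ 2.
    apply: sumr_ge0 => j _; apply: mulr_ge0; first exact: ltW.
    exact: exprn_ge0 (normr_ge0 _).
  by rewrite (Creal_ReP _ (ger0_real z0)).
move=> x xnz.
have e1 : qf (M^T *m P + P *m M) x = 2 * (x^T *m P *m (M *m x)) 0 0.
  rewrite /qf mulmxDr mulmxDl mxE.
  rewrite [X in X + _](_ : _ = (x^T *m (M^T *m P) *m x)^T 0 0); last by rewrite [RHS]mxE.
  rewrite !trmx_mul trmxK PT !mulmxA.
  by rewrite trmxK; ring.
have UT : U *m MC = T *m U by rewrite /T mulmxKV.
pose w := U *m map_mx toC x.
have wnz : w != 0.
  apply: contra xnz => /eqP w0.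
  have : map_mx toC x = invmx U *m w by rewrite /w mulKmx.
  by rewrite w0 mulmx0 => /eqP; rewrite map_mx_eq0.
rewrite -ltcR e1 rmorphM /= key map_mxM -/MC xw.
have -> : (w^t* *m Hd *m U *m (MC *m map_mx toC x)) = w^t* *m Hd *m T *m w.
  by rewrite -mulmxA (mulmxA U) UT -!mulmxA.
rewrite pmulr_rlt0 //; first exact: hneg.
by rewrite -[0]/(toC 0) ltcR ltr0n.
Qed.
End Lyap.

Section Main.
Variable R : rcfType.



Lemma L1 d (M : 'M[R]_d) : (0 < d)%N -> stable M ->
  forall c, exists P, psd P /\ lambda_max_lt (M^T *m P + P *m M) c.
Proof. by move=> d0 sM; have [P [Pp H]] := lyap d0 sM; apply: scale_lt Pp H. Qed.

Lemma L2 d (M P : 'M[R]_d) : psd P -> lambda_max_lt (M^T *m P + P *m M) 0 ->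
  stable M.
Proof.
move=> Pp H; apply: (negdef_stable Pp); apply: H2 => //.
by case: Pp => Ps _; rewrite linearD /= !trmx_mul trmxK Ps addrC.
Qed.

Lemma L3 d (M P : 'M[R]_d) : ~ stable M -> psd P ->
  lambda_max_ge (M^T *m P + P *m M) 0.
Proof.
move=> nS Pp; apply: NNPP => nG; apply: nS; apply: (L2 Pp) => a ea.
rewrite ltNge; apply/negP => a0; apply: nG; by exists a.
Qed.
End Main.

Unset Implicit Arguments.
Theorem theorem1 (R : rcfType) (N : nat) (nb mb : 'I_N -> nat)
  (Ab : forall i j, 'M[R]_(nb i, nb j))
  (Bb : forall i j, 'M[R]_(nb i, mb j))
  (Kb : forall i j, 'M[R]_(mb i, nb j))
  (HN : (0 < N)%N) (Hn : forall i, (0 < nb i)%N)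
  (HBdiag : forall i j, i != j -> Bb i j = 0) :
  (resilient Ab Bb Kb <-> gammaL0_neg_infty Ab Bb Kb) /\
  (~ resilient Ab Bb Kb <-> gammaL0_nonneg Ab Bb Kb).
Proof.
have d0 : (0 < \sum_i nb i)%N.
  rewrite (bigD1 (Ordinal HN)) //=; exact: (leq_trans (Hn _) (leq_addr _ _)).
split; split.
- by move=> Hr alpha pa; apply: L1 => //; apply: Hr.
- move=> Hg alpha pa; have [P [Pp HP]] := Hg alpha pa 0; exact: L2 Pp HP.
- move=> nR; have [alpha [pa ns]] : exists alpha, pure_attack alpha /\
      ~ stable (Aalpha Ab Bb Kb alpha).
    apply: NNPP => ne; apply: nR => alpha pa; apply: NNPP => ns.
    by apply: ne; exists alpha.
  by exists alpha; split => // P Pp; apply: L3.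
- move=> [alpha [pa HG]] Hr.
  have [P [Pp HP]] := L1 d0 (Hr alpha pa) 0.
  have [a ea a0] := HG P Pp.
  by have := HP a ea; rewrite ltNge a0.
Qed.
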